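(* Let $T\subset\mathbb R^2$ be a triangle all of whose interior angles are at least $\omega_0\in(0,\pi/3]$, and set $$c_{inv}^2:=24\cot(\omega_0)\Big(2\cot(\omega_0)-\cot(2\omega_0)+\big((2\cot(\omega_0)-\cot(2\omega_0))^2-3\big)^{1/2}\Big).$$ Then every affine function $p_1$ on $T$ satisfies $\|\nabla p_1\|_{L^2(T)}\le c_{inv}\,h_T^{-1}\|p_1\|_{L^2(T)}$.
   Context: $h_T=\operatorname{diam}(T)$. *)

(* Defs.v *)
From Stdlib Require Import Reals Lra.
Open Scope R_scope.

Definition pt := (R * R)%type.
Definition dot (u v : pt) : R := fst u * fst v + snd u * snd v.
Definition vsub (u v : pt) : pt := (fst u - fst v, snd u - snd v).
Definition dist2 (u v : pt) : R := sqrt (dot (vsub u v) (vsub u v)).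
Definition cot (x : R) : R := cos x / sin x.

Definition det2 (u v : pt) : R := fst u * snd v - snd u * fst v.
Definition nondegenerate (A B C : pt) : Prop := det2 (vsub B A) (vsub C A) <> 0.

Definition in_tri (A B C x : pt) : Prop :=
  exists l1 l2 l3, 0 <= l1 /\ 0 <= l2 /\ 0 <= l3 /\ l1 + l2 + l3 = 1 /\
    fst x = l1 * fst A + l2 * fst B + l3 * fst C /\
    snd x = l1 * snd A + l2 * snd B + l3 * snd C.

Definition angle_at (P Q S : pt) : R :=
  acos (dot (vsub Q P) (vsub S P) / (dist2 Q P * dist2 S P)).

Definition is_diam (A B C : pt) (h : R) : Prop :=
  is_lub (fun d => exists x y, in_tri A B C x /\ in_tri A B C y /\ d = dist2 x y) h.

Definition Fref (A B C : pt) (s t : R) : pt :=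
  (fst A + s * (fst B - fst A) + t * (fst C - fst A),
   snd A + s * (snd B - snd A) + t * (snd C - snd A)).

(* v = int_T g  (Lebesgue integral over T, computed as iterated Riemann integral
   over the reference triangle via the affine change of variables) *)
Definition tri_integral_is (A B C : pt) (g : pt -> R) (v : R) : Prop :=
  exists h : R -> R,
    (forall s, 0 <= s <= 1 ->
       exists pr : Riemann_integrable (fun t => g (Fref A B C s t)) 0 (1 - s),
         RiemannInt pr = h s) /\
    exists pr2 : Riemann_integrable h 0 1,
      v = Rabs (det2 (vsub B A) (vsub C A)) * RiemannInt pr2.

Definition affine (a b c : R) (x : pt) : R := a * fst x + b * snd x + c.

Definition c_inv_sq (w0 : R) : R :=
  24 * cot w0 * (2 * cot w0 - cot (2 * w0)
     + sqrt ((2 * cot w0 - cot (2 * w0)) ^ 2 - 3)).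

(* Main.v *)
Require Import Defs.
From Stdlib Require Import Reals Lra Psatz.
From Coquelicot Require Import Coquelicot.
Open Scope R_scope.


Ltac fixeq := fixeq.

Lemma RInt_poly (F f : R -> R) (a b : R) :
  (forall x, is_derive F x (f x)) -> (forall x, continuous f x) ->
  @eq R (RInt f a b) (F b - F a).
Proof.
  intros HF Hc. apply is_RInt_unique.
  apply (is_RInt_derive F f a b); intros; auto.
Qed.

Lemma RInt_poly_eq (F f : R -> R) (a b v : R) :
  (forall x, is_derive F x (f x)) -> (forall x, continuous f x) ->
  F b - F a = v -> RInt f a b = v.
Proof. intros H1 H2 H3. rewrite <- H3. apply RInt_poly; auto. Qed.

Lemma tri_int_quad (A B C : pt) (g : pt -> R) (al be ga v : R) :
  (forall s t, g (Fref A B C s t) = (al + be * s + ga * t) ^ 2) ->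
  tri_integral_is A B C g v ->
  v = Rabs (det2 (vsub B A) (vsub C A)) *
      (al^2/2 + al*be/3 + al*ga/3 + be^2/12 + ga^2/12 + be*ga/12).
Proof.
  intros Hg [h [Hh [pr2 Hv]]]. rewrite Hv. f_equal.
  rewrite <- RInt_Reals.
  set (H := fun s => (al + be*s)^2*(1-s) + (al+be*s)*ga*(1-s)^2 + ga^2*(1-s)^3/3).
  assert (E : RInt h 0 1 = RInt H 0 1).
  { apply RInt_ext. intros x Hx. rewrite Rmin_left in Hx by lra.
    rewrite Rmax_right in Hx by lra.
    destruct (Hh x ltac:(lra)) as [pr Hpr]. rewrite <- Hpr, <- RInt_Reals.
    rewrite (RInt_ext _ (fun t => (al + be*x + ga*t)^2)).
    2:{ intros; apply Hg. }
    apply (RInt_poly_eq (fun t => (al+be*x)^2*t + (al+be*x)*ga*t^2 + ga^2*t^3/3)).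
    - intros t; auto_derive; auto; field.
    - intros t. apply (@ex_derive_continuous R_AbsRing R_NormedModule). auto_derive. auto.
    - unfold H. field. }
  rewrite E.
  set (c0 := al^2 + al*ga + ga^2/3).
  set (c1 := 2*al*be - al^2 + ga*be - 2*al*ga - ga^2).
  set (c2 := be^2 - 2*al*be + al*ga - 2*be*ga + ga^2).
  set (c3 := -be^2 + be*ga - ga^2/3).
  apply (RInt_poly_eq (fun s => c0*s + c1*s^2/2 + c2*s^3/3 + c3*s^4/4)).
  - intros s; auto_derive; auto. unfold H, c0, c1, c2, c3; field.
  - intros s. unfold H. apply (@ex_derive_continuous R_AbsRing R_NormedModule). auto_derive. auto.
  - unfold c0, c1, c2, c3; field.
Qed.

Lemma cot_bound w0 (a b : pt) : 0 < w0 -> w0 <= PI/3 -> det2 a b <> 0 ->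
  w0 <= acos (dot a b / (sqrt (dot a a) * sqrt (dot b b))) ->
  dot a b <= cot w0 * Rabs (det2 a b).
Proof.
  intros h0 h1 hD hw.
  destruct a as [a1 a2]; destruct b as [b1 b2]; unfold dot, det2 in *; simpl in *.
  set (e := a1*b1 + a2*b2) in *. set (D := a1*b2 - a2*b1) in *.
  set (aa := a1*a1+a2*a2) in *. set (bb := b1*b1+b2*b2) in *.
  assert (Lag : e^2 + D^2 = aa*bb) by (unfold e, D, aa, bb; ring).
  assert (hD2 : 0 < D^2) by (pose proof (Rsqr_pos_lt D hD); unfold Rsqr in *; nra).
  assert (haa : 0 <= aa) by (unfold aa; nra).
  assert (hbb : 0 <= bb) by (unfold bb; nra).
  assert (hab : 0 < aa*bb) by nra.
  set (N := sqrt aa * sqrt bb) in *.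
  assert (hN : N = sqrt (aa*bb)) by (unfold N; rewrite sqrt_mult; auto).
  assert (hN0 : 0 < N) by (rewrite hN; apply sqrt_lt_R0; auto).
  assert (hN2 : N^2 = aa*bb) by (rewrite hN; simpl; rewrite Rmult_1_r; apply sqrt_sqrt; lra).
  set (x := e / N) in *.
  assert (hex : e = x * N) by (unfold x; field; lra).
  assert (hx2 : x^2 < 1).
  { assert (x^2 * N^2 < N^2) by (rewrite <- (Rpow_mult_distr x N 2), <- hex; nra). nra. }
  assert (hx : -1 <= x <= 1) by (split; nra).
  assert (hs : sin (acos x) = Rabs D / N).
  { rewrite sin_acos by auto.
    assert (E : 1 - x² = (Rabs D / N)^2).
    { unfold Rsqr.
      assert (E1 : (Rabs D / N)^2 = (Rabs D)^2 / N^2) by (field; lra).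
      rewrite E1, pow2_abs.
      replace (D^2) with (N^2 - e^2) by (rewrite hN2; lra).
      unfold x. field; lra. }
    rewrite E. apply sqrt_pow2. apply Rmult_le_pos; [apply Rabs_pos|].
    left; apply Rinv_0_lt_compat; auto. }
  assert (hc : cos (acos x) = x) by (apply cos_acos; auto).
  pose proof (acos_bound x) as hb.
  assert (hPI : PI/3 < PI) by (pose proof PI_RGT_0; lra).
  assert (hsin : 0 <= sin (acos x - w0)) by (apply sin_ge_0; lra).
  rewrite sin_minus, hs, hc in hsin.
  assert (hsw : 0 < sin w0) by (apply sin_gt_0; lra).
  unfold cot. rewrite hex.
  apply (Rmult_le_reg_r (sin w0)); auto.
  assert (E2 : cos w0 / sin w0 * Rabs D * sin w0 = N * (Rabs D / N * cos w0))
    by (field; lra).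
  rewrite E2. nra.
Qed.

Lemma jensen3 (l1 l2 l3 x1 x2 x3 y1 y2 y3 M : R) :
  0 <= l1 -> 0 <= l2 -> 0 <= l3 -> l1 + l2 + l3 = 1 ->
  x1^2 + y1^2 <= M -> x2^2 + y2^2 <= M -> x3^2 + y3^2 <= M ->
  (l1*x1 + l2*x2 + l3*x3)^2 + (l1*y1 + l2*y2 + l3*y3)^2 <= M.
Proof.
  intros h1 h2 h3 hs m1 m2 m3.
  assert (E : l1*(x1^2+y1^2) + l2*(x2^2+y2^2) + l3*(x3^2+y3^2)
     - ((l1*x1 + l2*x2 + l3*x3)^2 + (l1*y1 + l2*y2 + l3*y3)^2)
     = l1*l2*((x1-x2)^2+(y1-y2)^2) + l1*l3*((x1-x3)^2+(y1-y3)^2)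
       + l2*l3*((x2-x3)^2+(y2-y3)^2)).
  { replace l3 with (1 - l1 - l2) by lra. ring. }
  assert (0 <= l1*l2*((x1-x2)^2+(y1-y2)^2)) by (apply Rmult_le_pos; [apply Rmult_le_pos; auto | apply Rplus_le_le_0_compat; apply pow2_ge_0]).
  assert (0 <= l1*l3*((x1-x3)^2+(y1-y3)^2)) by (apply Rmult_le_pos; [apply Rmult_le_pos; auto | apply Rplus_le_le_0_compat; apply pow2_ge_0]).
  assert (0 <= l2*l3*((x2-x3)^2+(y2-y3)^2)) by (apply Rmult_le_pos; [apply Rmult_le_pos; auto | apply Rplus_le_le_0_compat; apply pow2_ge_0]).
  assert (l1*(x1^2+y1^2) + l2*(x2^2+y2^2) + l3*(x3^2+y3^2) <= M) by nra.
  lra.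
Qed.

Definition sq (P Q : pt) := (fst P - fst Q)^2 + (snd P - snd Q)^2.

Lemma tri_pt_bound (A B C y : pt) (M : R) :
  sq A y <= M -> sq B y <= M -> sq C y <= M ->
  forall x, in_tri A B C x -> sq x y <= M.
Proof.
  intros hA hB hC x [l1 [l2 [l3 [h1 [h2 [h3 [hs [ex ey]]]]]]]].
  unfold sq in *. rewrite ex, ey.
  replace (l1 * fst A + l2 * fst B + l3 * fst C - fst y) with
    (l1*(fst A - fst y) + l2*(fst B - fst y) + l3*(fst C - fst y))
    by (replace l3 with (1-l1-l2) by lra; ring).
  replace (l1 * snd A + l2 * snd B + l3 * snd C - snd y) with
    (l1*(snd A - snd y) + l2*(snd B - snd y) + l3*(snd C - snd y))
    by (replace l3 with (1-l1-l2) by lra; ring).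
  apply jensen3; auto.
Qed.

Lemma sq_sym P Q : sq P Q = sq Q P.
Proof. unfold sq; ring. Qed.

Lemma sq_ge0 P Q : 0 <= sq P Q.
Proof. unfold sq; apply Rplus_le_le_0_compat; apply pow2_ge_0. Qed.

Lemma sq_self P : sq P P = 0.
Proof. unfold sq; ring. Qed.

Lemma diam_bound (A B C : pt) (hT : R) :
  nondegenerate A B C -> is_diam A B C hT ->
  0 < hT /\ hT^2 <= Rmax (Rmax (sq B A) (sq C A)) (sq C B).
Proof.
  intros hnd [hub hlub].
  set (M := Rmax (Rmax (sq B A) (sq C A)) (sq C B)).
  assert (m1 : sq B A <= M) by (unfold M; eauto using Rle_trans, Rmax_l).
  assert (m2 : sq C A <= M) by (unfold M; eauto using Rle_trans, Rmax_l, Rmax_r).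
  assert (m3 : sq C B <= M) by (unfold M; apply Rmax_r).
  assert (m0 : 0 <= M) by (pose proof (sq_ge0 B A); lra).
  assert (all : forall P Q, (P = A \/ P = B \/ P = C) -> (Q = A \/ Q = B \/ Q = C) -> sq P Q <= M).
  { intros P Q HP HQ.
    destruct HP as [ -> | [ -> | -> ] ]; destruct HQ as [ -> | [ -> | -> ] ];
      rewrite ?sq_self; auto; rewrite sq_sym; auto. }
  assert (bd : forall x y, in_tri A B C x -> in_tri A B C y -> sq x y <= M).
  { intros x y hx hy. apply (tri_pt_bound A B C y); auto.
    - rewrite sq_sym. apply (tri_pt_bound A B C A); auto.
    - rewrite sq_sym. apply (tri_pt_bound A B C B); auto.
    - rewrite sq_sym. apply (tri_pt_bound A B C C); auto. }
  assert (inA : in_tri A B C A).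
  { exists 1, 0, 0. repeat split; try lra; simpl; ring. }
  assert (inB : in_tri A B C B).
  { exists 0, 1, 0. repeat split; try lra; simpl; ring. }
  assert (hup : hT <= sqrt M).
  { apply hlub. intros d [x [y [hx [hy ->]]]]. unfold dist2.
    apply sqrt_le_1_alt. pose proof (bd x y hx hy). unfold sq, dot, vsub in *; simpl in *. nra. }
  assert (hpos : 0 < sqrt (sq B A)).
  { apply sqrt_lt_R0. unfold nondegenerate, det2, vsub, sq in *; simpl in *.
    destruct (Req_dec (fst B - fst A) 0) as [e1|e1].
    - destruct (Req_dec (snd B - snd A) 0) as [e2|e2].
      + exfalso; apply hnd. rewrite e1, e2; ring.
      + assert (0 < (snd B - snd A)^2) by (rewrite <- Rsqr_pow2; apply Rsqr_pos_lt; auto).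
        pose proof (pow2_ge_0 (fst B - fst A)). lra.
    - assert (0 < (fst B - fst A)^2) by (rewrite <- Rsqr_pow2; apply Rsqr_pos_lt; auto).
      pose proof (pow2_ge_0 (snd B - snd A)). lra. }
  assert (hlow : sqrt (sq B A) <= hT).
  { apply hub. exists B, A. split; [auto|split;[auto|]]. unfold dist2, sq, dot, vsub; simpl; f_equal; ring. }
  split; [lra|].
  assert (hT^2 <= (sqrt M)^2) by (apply pow_incr; lra).
  rewrite <- !Rsqr_pow2, Rsqr_sqrt in H by auto. rewrite <- Rsqr_pow2. auto.
Qed.

Lemma psd2 (al be de x y : R) : 0 <= al + de -> be^2 <= al*de ->
  0 <= al*x^2 + 2*be*x*y + de*y^2.
Proof.
  intros h1 h2.
  pose proof (pow2_ge_0 be).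
  assert (ha : 0 <= al).
  { destruct (Rle_lt_dec 0 al); auto. assert (0 < de) by lra. nra. }
  destruct (Rle_lt_dec al 0) as [h0|h0].
  - assert (al = 0) by lra. subst al.
    assert (be^2 <= 0) by lra. assert (be = 0).
    { apply Rsqr_0_uniq. rewrite Rsqr_pow2. pose proof (pow2_ge_0 be). lra. }
    subst be. assert (0 <= de) by lra. pose proof (pow2_ge_0 y).
    replace (0*x^2 + 2*0*x*y + de*y^2) with (de*y^2) by ring.
    apply Rmult_le_pos; auto.
  - assert (E : al*(al*x^2 + 2*be*x*y + de*y^2) = (al*x+be*y)^2 + (al*de - be^2)*y^2) by ring.
    assert (0 <= (al*x+be*y)^2 + (al*de - be^2)*y^2).
    { pose proof (pow2_ge_0 (al*x+be*y)). pose proof (pow2_ge_0 y).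
      assert (0 <= (al*de - be^2)*y^2) by (apply Rmult_le_pos; lra). lra. }
    rewrite <- E in H0.
    destruct (Rle_lt_dec 0 (al*x^2 + 2*be*x*y + de*y^2)); auto.
    exfalso. assert (al*(al*x^2 + 2*be*x*y + de*y^2) < 0).
    { assert (0 < al * (-(al*x^2 + 2*be*x*y + de*y^2))) by (apply Rmult_lt_0_compat; lra). lra. }
    lra.
Qed.

Lemma key (u1 u2 v1 v2 k d a b : R) :
  0 < k -> 0 < d -> d^2 = (u1*v2 - u2*v1)^2 ->
  u1*v1 + u2*v2 <= k*d ->
  (v1-u1)*(-u1) + (v2-u2)*(-u2) <= k*d ->
  (-v1)*(u1-v1) + (-v2)*(u2-v2) <= k*d ->
  d*(a^2+b^2) <= k*((a*u1+b*u2)^2 + (a*v1+b*v2)^2 + (a*(v1-u1)+b*(v2-u2))^2).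
Proof.
  intros hk hd hD h1 h2 h3.
  set (e1 := u1*v1 + u2*v2) in *.
  set (e2 := (v1-u1)*(-u1) + (v2-u2)*(-u2)) in *.
  set (e3 := (-v1)*(u1-v1) + (-v2)*(u2-v2)) in *.
  set (w1 := v1 - u1). set (w2 := v2 - u2).
  set (X11 := u1^2+v1^2+w1^2). set (X22 := u2^2+v2^2+w2^2).
  set (X12 := u1*u2+v1*v2+w1*w2).
  set (S := e1+e2+e3).
  assert (iS : X11 + X22 = 2*S) by (unfold X11, X22, S, e1, e2, e3, w1, w2; ring).
  assert (iE : e1*e2+e2*e3+e3*e1 = d^2) by (rewrite hD; unfold e1, e2, e3; ring).
  assert (iX : X11*X22 - X12^2 = 3*d^2) by (rewrite hD; unfold X11, X22, X12, w1, w2; ring).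
  assert (hS : 0 < S).
  { assert (0 < X11 + X22).
    { unfold X11, X22.
      destruct (Req_dec u1 0); destruct (Req_dec u2 0).
      - exfalso. subst. assert (d^2 = 0) by (rewrite hD; ring).
        assert (0 < d^2) by (apply pow_lt; auto). lra.
      - assert (0 < u2^2) by (rewrite <- Rsqr_pow2; apply Rsqr_pos_lt; auto).
        pose proof (pow2_ge_0 u1); pose proof (pow2_ge_0 v1); pose proof (pow2_ge_0 v2);
        pose proof (pow2_ge_0 w1); pose proof (pow2_ge_0 w2). lra.
      - assert (0 < u1^2) by (rewrite <- Rsqr_pow2; apply Rsqr_pos_lt; auto).
        pose proof (pow2_ge_0 u2); pose proof (pow2_ge_0 v1); pose proof (pow2_ge_0 v2);
        pose proof (pow2_ge_0 w1); pose proof (pow2_ge_0 w2). lra.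
      - assert (0 < u1^2) by (rewrite <- Rsqr_pow2; apply Rsqr_pos_lt; auto).
        pose proof (pow2_ge_0 u2); pose proof (pow2_ge_0 v1); pose proof (pow2_ge_0 v2);
        pose proof (pow2_ge_0 w1); pose proof (pow2_ge_0 w2). lra. }
    lra. }
  assert (hS2 : 3*d^2 <= S^2).
  { assert (S^2 - 3*(e1*e2+e2*e3+e3*e1) = ((e1-e2)^2+(e2-e3)^2+(e3-e1)^2)/2)
      by (unfold S; field).
    pose proof (pow2_ge_0 (e1-e2)); pose proof (pow2_ge_0 (e2-e3));
    pose proof (pow2_ge_0 (e3-e1)). lra. }
  assert (hkS : d <= k*S).
  { assert (S <= 3*k*d) by (unfold S; lra).
    assert (S^2 <= 3*k*d*S) by (replace (S^2) with (S*S) by ring; apply Rmult_le_compat_r; lra).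
    assert (3*d*d <= 3*d*(k*S)) by (replace (3*d*d) with (3*d^2) by ring; replace (3*d*(k*S)) with (3*k*d*S) by ring; lra).
    apply Rmult_le_reg_l with (3*d); lra. }
  assert (hdet : 0 <= 3*k^2*d^2 - 2*d*k*S + d^2).
  { assert (E : (k*d-e1)*(k*d-e2) + (k*d-e2)*(k*d-e3) + (k*d-e3)*(k*d-e1)
               = 3*k^2*d^2 - 2*k*d*S + (e1*e2+e2*e3+e3*e1)) by (unfold S; ring).
    rewrite iE in E.
    assert (0 <= (k*d-e1)*(k*d-e2)) by (apply Rmult_le_pos; lra).
    assert (0 <= (k*d-e2)*(k*d-e3)) by (apply Rmult_le_pos; lra).
    assert (0 <= (k*d-e3)*(k*d-e1)) by (apply Rmult_le_pos; lra).
    lra. }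
  pose proof (psd2 (k*X11 - d) (k*X12) (k*X22 - d) a b) as P.
  assert (P1 : 0 <= k*X11 - d + (k*X22 - d)) by (assert (k*X11 + k*X22 = 2*(k*S)) by (replace (2*(k*S)) with (k*(2*S)) by ring; rewrite <- iS; ring); lra).
  assert (P2 : (k*X12)^2 <= (k*X11 - d)*(k*X22 - d)).
  { assert (E : (k*X11 - d)*(k*X22 - d) - (k*X12)^2 = k^2*(X11*X22 - X12^2) - d*k*(X11+X22) + d^2) by ring.
    rewrite iX, iS in E. lra. }
  specialize (P P1 P2).
  assert (E : k*((a*u1+b*u2)^2 + (a*v1+b*v2)^2 + (a*(v1-u1)+b*(v2-u2))^2) - d*(a^2+b^2)
     = (k*X11 - d)*a^2 + 2*(k*X12)*a*b + (k*X22 - d)*b^2)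
     by (unfold X11, X22, X12, w1, w2; ring).
  unfold w1, w2 in *; lra.
Qed.

Lemma cot_facts w0 : 0 < w0 -> w0 <= PI/3 ->
  0 < cot w0 /\ 1 <= 3 * cot w0 ^ 2 /\ c_inv_sq w0 = 72 * cot w0 ^ 2.
Proof.
  intros h0 h1. pose proof PI_RGT_0.
  assert (hs : 0 < sin w0) by (apply sin_gt_0; lra).
  assert (hc : 0 < cos w0) by (apply cos_gt_0; lra).
  set (k := cot w0).
  assert (hk : 0 < k) by (unfold k, cot; apply Rdiv_lt_0_compat; auto).
  assert (h3 : 1 <= 3 * k^2).
  { assert (0 <= sin (PI/3 - w0)) by (apply sin_ge_0; lra).
    rewrite sin_minus, sin_PI3, cos_PI3 in H0.
    assert (sin w0 <= sqrt 3 * cos w0) by lra.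
    assert (1 <= sqrt 3 * k) by (unfold k, cot; apply (Rmult_le_reg_r (sin w0)); auto;
       replace (sqrt 3 * (cos w0 / sin w0) * sin w0) with (sqrt 3 * cos w0) by (field; lra); lra).
    assert (1 <= (sqrt 3 * k)^2) by nra.
    rewrite Rpow_mult_distr, <- Rsqr_pow2, Rsqr_sqrt in H3 by lra. lra. }
  repeat split; auto.
  assert (c2 : cot (2*w0) = (k^2 - 1)/(2*k)).
  { unfold cot, k, cot. rewrite cos_2a, sin_2a. field. lra. }
  unfold c_inv_sq. fold k. rewrite c2.
  assert (E : (2 * k - (k ^ 2 - 1) / (2 * k)) ^ 2 - 3 = ((3*k^2-1)/(2*k))^2) by (field; lra).
  rewrite E, sqrt_pow2.
  - field; lra.
  - unfold Rdiv; apply Rmult_le_pos; [lra|left; apply Rinv_0_lt_compat; lra].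
Qed.

Theorem lemma4p4 (w0 : R) (A B C : pt) (hT : R) (a b c : R) (I0 I1 : R) :
  0 < w0 -> w0 <= PI / 3 ->
  nondegenerate A B C ->
  w0 <= angle_at A B C -> w0 <= angle_at B C A -> w0 <= angle_at C A B ->
  is_diam A B C hT ->
  tri_integral_is A B C (fun x => (affine a b c x) ^ 2) I0 ->
  tri_integral_is A B C (fun _ => a ^ 2 + b ^ 2) I1 ->
  sqrt I1 <= sqrt (c_inv_sq w0) * / hT * sqrt I0.
Proof.
  intros h0 h1 hnd hA hB hC hdiam hI0 hI1.
  destruct (cot_facts w0 h0 h1) as [hk [h3 hcv]].
  set (k := cot w0) in *.
  rewrite hcv.
  set (u1 := fst B - fst A). set (u2 := snd B - snd A).
  set (v1 := fst C - fst A). set (v2 := snd C - snd A).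
  set (D := det2 (vsub B A) (vsub C A)).
  assert (hDn : D <> 0) by exact hnd.
  set (d := Rabs D).
  assert (hd : 0 < d) by (apply Rabs_pos_lt; auto).
  assert (hd2 : d^2 = (u1*v2 - u2*v1)^2) by (unfold d; rewrite pow2_abs; reflexivity).
  unfold angle_at, dist2 in hA, hB, hC.
  pose proof (cot_bound w0 _ _ h0 h1 hnd hA) as e1.
  assert (DB : det2 (vsub C B) (vsub A B) = D) by (unfold D, det2, vsub; simpl; ring).
  assert (DC : det2 (vsub A C) (vsub B C) = D) by (unfold D, det2, vsub; simpl; ring).
  assert (hnB : det2 (vsub C B) (vsub A B) <> 0) by (rewrite DB; auto).
  assert (hnC : det2 (vsub A C) (vsub B C) <> 0) by (rewrite DC; auto).
  pose proof (cot_bound w0 _ _ h0 h1 hnB hB) as e2.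
  pose proof (cot_bound w0 _ _ h0 h1 hnC hC) as e3.
  rewrite DB in e2. rewrite DC in e3. fold D d in e1.
  assert (E1 : dot (vsub B A) (vsub C A) = u1*v1 + u2*v2) by (unfold dot, vsub, u1, u2, v1, v2; simpl; ring).
  assert (E2 : dot (vsub C B) (vsub A B) = (v1-u1)*(-u1) + (v2-u2)*(-u2))
    by (unfold dot, vsub, u1, u2, v1, v2; simpl; ring).
  assert (E3 : dot (vsub A C) (vsub B C) = (-v1)*(u1-v1) + (-v2)*(u2-v2))
    by (unfold dot, vsub, u1, u2, v1, v2; simpl; ring).
  rewrite E1 in e1. rewrite E2 in e2. rewrite E3 in e3. fold k in e1, e2, e3. fold d in e2, e3.
  destruct (diam_bound A B C hT hnd hdiam) as [hT0 hT2].
  assert (hM : Rmax (Rmax (sq B A) (sq C A)) (sq C B) <= 2*k*d).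
  { assert (sq B A = (u1*v1+u2*v2) + ((v1-u1)*(-u1) + (v2-u2)*(-u2)))
      by (unfold sq, u1, u2, v1, v2; ring).
    assert (sq C A = (u1*v1+u2*v2) + ((-v1)*(u1-v1) + (-v2)*(u2-v2)))
      by (unfold sq, u1, u2, v1, v2; ring).
    assert (sq C B = ((v1-u1)*(-u1) + (v2-u2)*(-u2)) + ((-v1)*(u1-v1) + (-v2)*(u2-v2)))
      by (unfold sq, u1, u2, v1, v2; ring).
    apply Rmax_lub; [apply Rmax_lub|]; lra. }
  assert (hh : hT^2 <= 2*k*d) by lra.
  set (al := affine a b c A). set (be := a*u1+b*u2). set (ga := a*v1+b*v2).
  assert (Hg0 : forall s t, (fun x => affine a b c x ^ 2) (Fref A B C s t) = (al + be*s + ga*t)^2)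
    by (intros s t; cbv beta; unfold al, be, ga, u1, u2, v1, v2, affine, Fref; simpl; ring).
  pose proof (tri_int_quad A B C _ al be ga I0 Hg0 hI0) as HI0.
  rewrite HI0; clear HI0.
  set (k0 := a^2+b^2).
  assert (hk0 : 0 <= k0) by (unfold k0; pose proof (pow2_ge_0 a); pose proof (pow2_ge_0 b); lra).
  assert (Hg1 : forall s t, (fun _ : pt => a ^ 2 + b ^ 2) (Fref A B C s t) = (sqrt k0 + 0*s + 0*t)^2).
  { intros s t. replace (sqrt k0 + 0*s + 0*t) with (sqrt k0) by ring.
    rewrite pow2_sqrt; auto. }
  pose proof (tri_int_quad A B C _ (sqrt k0) 0 0 I1 Hg1 hI1) as HI1.
  rewrite HI1; clear HI1.
  fold D d.
  set (Iq := al ^ 2 / 2 + al * be / 3 + al * ga / 3 + be ^ 2 / 12 + ga ^ 2 / 12 + be * ga / 12).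
  replace (sqrt k0 ^ 2 / 2 + sqrt k0 * 0 / 3 + sqrt k0 * 0 / 3 + 0 ^ 2 / 12 + 0 ^ 2 / 12 + 0 * 0 / 12)
    with (k0/2).
  2:{ rewrite <- Rsqr_pow2, Rsqr_sqrt; auto. field. }
  set (Q := be^2 + ga^2 + (ga-be)^2).
  assert (hQ : 0 <= Q) by (unfold Q; pose proof (pow2_ge_0 be); pose proof (pow2_ge_0 ga);
                          pose proof (pow2_ge_0 (ga-be)); lra).
  assert (hIq : Q/72 <= Iq).
  { assert (Iq - Q/72 = (al + (be+ga)/3)^2/2) by (unfold Iq, Q; field).
    pose proof (pow2_ge_0 (al + (be+ga)/3)). lra. }
  assert (hkey : d*k0 <= k*Q).
  { unfold k0, Q.
    replace (be^2 + ga^2 + (ga-be)^2) with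
      ((a*u1+b*u2)^2 + (a*v1+b*v2)^2 + (a*(v1-u1)+b*(v2-u2))^2) by (unfold be, ga; ring).
    apply key; auto. }
  assert (main : hT^2 * (d*(k0/2)) <= 72*k^2 * (d*Iq)).
  { assert (s1 : hT^2 * (d*(k0/2)) <= 2*k*d * (d*(k0/2)))
      by (apply Rmult_le_compat_r; auto; apply Rmult_le_pos; lra).
    assert (s2 : 2*k*d * (d*(k0/2)) <= k*d * (k*Q)).
    { replace (2*k*d * (d*(k0/2))) with (k*d*(d*k0)) by field.
      apply Rmult_le_compat_l; auto. apply Rmult_le_pos; lra. }
    assert (s3 : k*d*(k*Q) <= 72*k^2*(d*Iq)).
    { replace (k*d*(k*Q)) with (72*k^2*(d*(Q/72))) by field.
      apply Rmult_le_compat_l. pose proof (pow2_ge_0 k); lra.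
      apply Rmult_le_compat_l; lra. }
    lra. }
  assert (hIqp : 0 <= Iq) by (assert (0 <= Q/72) by lra; lra).
  assert (hI0p : 0 <= d*Iq) by (apply Rmult_le_pos; lra).
  assert (hI1p : 0 <= d*(k0/2)) by (apply Rmult_le_pos; lra).
  assert (hc0 : 0 <= 72*k^2) by (pose proof (pow2_ge_0 k); lra).
  apply (Rmult_le_reg_r hT); auto.
  replace (sqrt (72 * k ^ 2) * / hT * sqrt (d * Iq) * hT) with (sqrt (72*k^2 * (d*Iq)))
    by (rewrite sqrt_mult by auto; field; lra).
  replace (sqrt (d * (k0 / 2)) * hT) with (sqrt (hT^2 * (d*(k0/2)))).
  2:{ rewrite sqrt_mult by (auto; apply pow2_ge_0). rewrite sqrt_pow2 by lra. ring. }
  apply sqrt_le_1_alt. exact main.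
Qed.
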